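(* Let a pure two-mode Gaussian state have covariance matrix $$\boldsymbol\Sigma=\begin{bmatrix}a\,\mathbf S(r)&\mathbf R(\phi)\mathbf C\\ [\mathbf R(\phi)\mathbf C]^\top&b\,\mathbb{I}_2\end{bmatrix},$$ where $\mathbf S(r)=\mathrm{diag}(r,r^{-1})$ with $r>0$, $\mathbf R(\phi)=\begin{bmatrix}\cos\phi&-\sin\phi\\ \sin\phi&\cos\phi\end{bmatrix}$, $\mathbf C=\mathrm{diag}(c_+,c_-)$, and $a,b,c_\pm,\phi$ real. Then $a=b$.
   Context: Quadratures $\mathbf R=(q_S,p_S,q_I,p_I)^\top$ with $[R_i,R_j]=\mathrm{i}\Omega_{ij}$, $\boldsymbol\Omega=\mathbb{I}_2\otimes\begin{bmatrix}0&1\\-1&0\end{bmatrix}$; covariance $\Sigma_{ij}=\tfrac12\langle R_iR_j+R_jR_i\rangle-\langle R_i\rangle\langle R_j\rangle$, satisfying $\boldsymbol\Sigma+\mathrm{i}\boldsymbol\Omega/2\succeq0$. In this convention a two-mode Gaussian state is pure iff $\det\boldsymbol\Sigma=1/16$. *)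

(* Defs.v *)
From HB Require Import structures.
From mathcomp Require Import all_boot all_order all_algebra.
From mathcomp Require Import reals trigo.
From mathcomp Require Import complex.
Set Implicit Arguments. Unset Strict Implicit. Unset Printing Implicit Defensive.
Import Order.TTheory GRing.Theory Num.Theory.
Local Open Scope ring_scope.
Local Open Scope complex_scope.

Section Defs.
Variable R : realType.

Definition Jmx : 'M[R]_2 := \matrix_(i < 2, j < 2)
  (if (i == 0) && (j == 1) then 1 else if (i == 1) && (j == 0) then -1 else 0).

(* Omega = I_2 (x) J, mode ordering (q_S,p_S,q_I,p_I) *)
Definition Omega2 : 'M[R]_(2 + 2) := block_mx Jmx 0 0 Jmx.

Definition Smx (r : R) : 'M[R]_2 := \matrix_(i < 2, j < 2)
  (if i == j then (if i == 0 then r else r^-1) else 0).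

Definition Rmx (phi : R) : 'M[R]_2 := \matrix_(i < 2, j < 2)
  (if i == 0 then (if j == 0 then cos phi else - sin phi)
   else (if j == 0 then sin phi else cos phi)).

Definition Cmx (cp cm : R) : 'M[R]_2 := \matrix_(i < 2, j < 2)
  (if i == j then (if i == 0 then cp else cm) else 0).

Definition Sigma_of (a b r phi cp cm : R) : 'M[R]_(2 + 2) :=
  block_mx (a *: Smx r) (Rmx phi *m Cmx cp cm)
           ((Rmx phi *m Cmx cp cm)^T) (b%:M).

(* Hermitian positive semidefiniteness of a complex matrix:
   z^* M z >= 0 for every complex vector z (>= in the numeric order of R[i],
   which in particular forces the value to be real). *)
Definition psd_C n (M : 'M[R[i]]_n) : Prop :=
  forall z : 'cV[R[i]]_n, 0 <= ((map_mx conjc z)^T *m M *m z) 0 0.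

Definition toCmx n (M : 'M[R]_n) : 'M[R[i]]_n := map_mx (fun x => x%:C) M.

Definition bona_fide (S : 'M[R]_(2 + 2)) : Prop :=
  psd_C (toCmx S + (('i : R[i]) / 2%:R) *: toCmx Omega2).

Definition pure_gaussian_cov (S : 'M[R]_(2 + 2)) : Prop :=
  S^T = S /\ bona_fide S /\ \det S = 16%:R^-1.
End Defs.

(* Main.v *)
Require Import Defs.
From HB Require Import structures.
From mathcomp Require Import all_boot all_order all_algebra.
From mathcomp Require Import reals trigo.
From mathcomp Require Import complex.
From mathcomp Require Import ring lra.
Import Order.TTheory GRing.Theory Num.Theory.
Local Open Scope ring_scope.

Section Alg.

Variable R : realFieldType.
Variables (a b r ri c s u v : R).
Definition Qp (x0 x1 x2 x3 y0 y1 y2 y3 : R) : R :=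
  a*r*(x0^+2+y0^+2) + a*ri*(x1^+2+y1^+2) + b*(x2^+2+y2^+2+x3^+2+y3^+2)
  + 2%:R*(c*u*(x0*x2+y0*y2) - s*v*(x0*x3+y0*y3) + s*u*(x1*x2+y1*y2) + c*v*(x1*x3+y1*y3))
  - (x0*y1 - x1*y0) - (x2*y3 - x3*y2).
Definition herm (al ga p q x1r x1i x2r x2i : R) :=
  al * (x1r^+2 + x1i^+2) + ga * (x2r^+2 + x2i^+2)
     + 2%:R * (p * (x1r * x2r + x1i * x2i) - q * (x1r * x2i - x1i * x2r)).
Definition Draw := (b * (a * r) - (c^+2 * u^+2 + s^+2 * v^+2)) * (b * (a * ri) - (s^+2 * u^+2 + c^+2 * v^+2))
   - (c * s * (u^+2 - v^+2))^+2.
Definition dM := c * u * (c * v) + s * v * (s * u).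
Definition Del := a^+2 * (r * ri) + b^+2 + 2%:R * dM.
Definition kB := b^+2 - 4%:R^-1.
Definition alB := kB * (a * r) - b * (c^+2 * u^+2 + s^+2 * v^+2).
Definition gaB := kB * (a * ri) - b * (s^+2 * u^+2 + c^+2 * v^+2).
Definition pB := - (b * (c * s * (u^+2 - v^+2))).
Definition qB := (kB + dM) / 2%:R.

Lemma idB x1r x1i x2r x2i :
  let m1r := c*u*x1r + s*u*x2r in let m1i := c*u*x1i + s*u*x2i in
  let m2r := - (s*v*x1r) + c*v*x2r in let m2i := - (s*v*x1i) + c*v*x2i in
  Qp (kB*x1r) (kB*x2r) (-b* m1r - m2i/2%:R) (m1i/2%:R - b* m2r)
     (kB*x1i) (kB*x2i) (-b* m1i + m2r/2%:R) (-m1r/2%:R - b* m2i)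
  = kB * herm alB gaB pB qB x1r x1i x2r x2i.
Proof. rewrite /Qp /herm /alB /gaB /pB /qB /kB /dM /=. field; by []. Qed.

Lemma detB : alB * gaB - pB^+2 - qB^+2 = kB * (Draw - Del / 4%:R + 16%:R^-1).
Proof. rewrite /alB /gaB /pB /qB /kB /Draw /Del /dM. field; by []. Qed.
Definition kA := a^+2 * (r * ri) - 4%:R^-1.
Definition alA := kA * b - a * (u^+2 * (c^+2 * ri + s^+2 * r)).
Definition gaA := kA * b - a * (v^+2 * (s^+2 * ri + c^+2 * r)).
Definition pA := - (a * (c * s * (u * v) * (r - ri))).
Definition qA := (kA + dM) / 2%:R.
Lemma idA y1r y1i y2r y2i :
  let n1r := c*u*y1r - s*v*y2r in let n1i := c*u*y1i - s*v*y2i in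
  let n2r := s*u*y1r + c*v*y2r in let n2i := s*u*y1i + c*v*y2i in
  Qp (- (a*ri*n1r) - n2i/2%:R) (n1i/2%:R - a*r*n2r) (kA*y1r) (kA*y2r)
     (- (a*ri*n1i) + n2r/2%:R) (- n1r/2%:R - a*r*n2i) (kA*y1i) (kA*y2i)
  = kA * herm alA gaA pA qA y1r y1i y2r y2i.
Proof. rewrite /Qp /herm /alA /gaA /pA /qA /kA /dM /=. field; by []. Qed.

Lemma detA : alA * gaA - pA^+2 - qA^+2 = kA * (Draw - Del / 4%:R + 16%:R^-1).
Proof. rewrite /alA /gaA /pA /qA /kA /Draw /Del /dM. field; by []. Qed.
Lemma herm2 (al ga p q : R) :
  (forall x1r x1i x2r x2i : R, 0 <= al * (x1r^+2 + x1i^+2) + ga * (x2r^+2 + x2i^+2)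
     + 2%:R * (p * (x1r * x2r + x1i * x2i) - q * (x1r * x2i - x1i * x2r))) ->
  p^+2 + q^+2 <= al * ga.
Proof.
move=> H.
have hal : 0 <= al by have := H 1 0 0 0; lra.
have hga : 0 <= ga by have := H 0 0 1 0; lra.
have := H (- p) (- q) al 0.
have [al0|alpos] := eqVneq al 0.
  rewrite al0 => _.
  have [b0|bpos] := eqVneq (p^+2 + q^+2) 0; first by rewrite b0 mul0r.
  have hb : 0 < p^+2 + q^+2 by rewrite lt_def bpos /=; nra.
  have := H (- ((ga + 1) / (2%:R * (p^+2 + q^+2))) * p) (- ((ga + 1) / (2%:R * (p^+2 + q^+2))) * q) 1 0.
  set t := (ga + 1) / _.
  have ht : t * (2%:R * (p^+2 + q^+2)) = ga + 1 by rewrite /t mulfVK //; nra.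
  rewrite al0; nra.
have alp : 0 < al by rewrite lt_def alpos.
move=> h.
have : 0 <= al * (al * ga - (p^+2 + q^+2)) by nra.
rewrite pmulr_rge0 //; lra.
Qed.

Lemma core : 0 < r -> r * ri = 1 -> c^+2 + s^+2 = 1 ->
  (forall x0 x1 x2 x3 y0 y1 y2 y3, 0 <= Qp x0 x1 x2 x3 y0 y1 y2 y3) ->
  Draw = 16%:R^-1 -> a = b.
Proof.
move=> hr hri hcs HQ HD.
have hri0 : 0 < ri by nra.
have ha : 0 < a.
  have := HQ 1 0 0 0 0 1 0 0; rewrite /Qp; nra.
have hb : 2%:R^-1 <= b.
  have := HQ 0 0 1 0 0 0 0 1; rewrite /Qp => h.
  have -> : (2%:R^-1 : R) = 1 / 2%:R by rewrite mul1r.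
  rewrite ler_pdivrMr //; lra.
have ha2 : 1 <= 4%:R * a^+2.
  have := HQ 1 0 0 0 0 (2%:R*a*r) 0 0.
  have -> : Qp 1 0 0 0 0 (2%:R*a*r) 0 0 = a*r*(4%:R*a^+2-1) + 4%:R*a^+3*r*(r*ri-1).
    by rewrite /Qp; ring.
  rewrite hri subrr mulr0 addr0 => h.
  have har : 0 < a * r by nra.
  have : 0 <= 4%:R * a^+2 - 1 by rewrite -(pmulr_rge0 _ har).
  lra.
pose al := c^+2 * ri + s^+2 * r.
pose be := s^+2 * ri + c^+2 * r.
have hal : 0 <= al by rewrite /al; nra.
have hbe : 0 <= be by rewrite /be; nra.
have hu : u^+2 * al <= a * b.
  have := HQ (- (c*u*ri)) (- (s*u*r)) a 0 0 0 0 0.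
  have -> : Qp (- (c*u*ri)) (- (s*u*r)) a 0 0 0 0 0 = a * (a * b - u^+2 * al) + a * u^+2 * al * (r * ri - 1).
    by rewrite /Qp /al; ring.
  rewrite hri subrr mulr0 addr0 pmulr_rge0 //; lra.
have hv : v^+2 * be <= a * b.
  have := HQ (s*v*ri) (- (c*v*r)) 0 a 0 0 0 0.
  have -> : Qp (s*v*ri) (- (c*v*r)) 0 a 0 0 0 0 = a * (a * b - v^+2 * be) + a * v^+2 * be * (r * ri - 1).
    by rewrite /Qp /be; ring.
  rewrite hri subrr mulr0 addr0 pmulr_rge0 //; lra.
have habe : 1 <= al * be.
  have -> : al * be = (c^+2 + s^+2)^+2 + c^+2 * s^+2 * (r - ri)^+2 + (c^+2 + s^+2)^+2 * (r * ri - 1).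
    by rewrite /al /be; ring.
  rewrite hcs hri subrr mulr0 addr0 expr1n lerDl.
  apply: mulr_ge0; [apply: mulr_ge0|]; exact: sqr_ge0.
pose w := `|u * v|.
have hw0 : 0 <= w by rewrite /w.
have hw2 : w^+2 = u^+2 * v^+2 by rewrite /w -normrX ger0_norm ?sqr_ge0 // exprMn.
have huvw1 := ler_norm (u * v).
have huvw2 := ler_norm (- (u * v)).
rewrite normrN -/w in huvw2. rewrite -/w in huvw1.
have hab : 0 < a * b by apply: mulr_gt0 => //; lra.
have habw : w <= a * b.
  have h1 : u^+2 * v^+2 <= (a * b)^+2.
    have : (u^+2 * al) * (v^+2 * be) <= (a*b) * (a*b) by apply: ler_pM; nra.
    nra.
  rewrite -hw2 in h1. nra.
pose T := u^+2 * al + v^+2 * be.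
have hT : 2%:R * w <= T.
  have hT0 : 0 <= T by rewrite /T; nra.
  have : (2%:R * w)^+2 <= T^+2.
    have -> : T^+2 = (u^+2 * al - v^+2 * be)^+2 + 4%:R * (u^+2 * v^+2) * (al * be) by rewrite /T; ring.
    rewrite exprMn hw2.
    have h1 : 0 <= u^+2 * v^+2 * (al * be - 1) by apply: mulr_ge0; [rewrite -exprMn; exact: sqr_ge0| lra].
    have h2 := sqr_ge0 (u^+2 * al - v^+2 * be).
    nra.
  nra.
have hDr : Draw = a^+2 * b^+2 * (r * ri) - a * b * T + u^+2 * v^+2 * (c^+2 + s^+2)^+2.
  by rewrite /Draw /T /al /be; ring.
rewrite hri hcs expr1n !mulr1 -hw2 HD in hDr.
have hq : 4%:R^-1 <= a * b - w.
  have h16 : 16%:R^-1 <= (a * b - w)^+2 by nra.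
  nra.
have hDel0 : Draw - Del / 4%:R + 16%:R^-1 = 8%:R^-1 - (a^+2 + b^+2 + 2%:R * (u * v)) / 4%:R.
  have -> : Del = a^+2 * (r * ri) + b^+2 + 2%:R * (u * v) * (c^+2 + s^+2) by rewrite /Del /dM; ring.
  rewrite HD hri hcs; field; by [].
have hDel : a^+2 + b^+2 + 2%:R * (u * v) <= 2%:R^-1 \/ a = b.
  have [kBpos|kBle] := ltP 0 kB.
    left.
    have Hh : forall x1r x1i x2r x2i, 0 <= herm alB gaB pB qB x1r x1i x2r x2i.
      move=> x1r x1i x2r x2i.
      have := HQ (kB*x1r) (kB*x2r) (-b*(c*u*x1r + s*u*x2r) - (- (s*v*x1i) + c*v*x2i)/2%:R)
                 ((c*u*x1i + s*u*x2i)/2%:R - b*(- (s*v*x1r) + c*v*x2r))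
                 (kB*x1i) (kB*x2i) (-b*(c*u*x1i + s*u*x2i) + (- (s*v*x1r) + c*v*x2r)/2%:R)
                 (-(c*u*x1r + s*u*x2r)/2%:R - b*(- (s*v*x1i) + c*v*x2i)).
      by rewrite (idB x1r x1i x2r x2i) pmulr_rge0.
    have := @herm2 _ _ _ _ Hh.
    have := detB; rewrite hDel0 => e h.
    have : 0 <= kB * (8%:R^-1 - (a^+2 + b^+2 + 2%:R * (u * v)) / 4%:R) by rewrite -e; lra.
    rewrite pmulr_rge0 //; lra.
  have hb2 : b = 2%:R^-1.
    move: kBle; rewrite /kB; nra.
  have [kApos|kAle] := ltP 0 kA.
    left.
    have Hh : forall y1r y1i y2r y2i, 0 <= herm alA gaA pA qA y1r y1i y2r y2i.
      move=> y1r y1i y2r y2i.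
      have := HQ (- (a*ri*(c*u*y1r - s*v*y2r)) - (s*u*y1i + c*v*y2i)/2%:R)
                 ((c*u*y1i - s*v*y2i)/2%:R - a*r*(s*u*y1r + c*v*y2r)) (kA*y1r) (kA*y2r)
                 (- (a*ri*(c*u*y1i - s*v*y2i)) + (s*u*y1r + c*v*y2r)/2%:R)
                 (- (c*u*y1r - s*v*y2r)/2%:R - a*r*(s*u*y1i + c*v*y2i)) (kA*y1i) (kA*y2i).
      by rewrite (idA y1r y1i y2r y2i) pmulr_rge0.
    have := @herm2 _ _ _ _ Hh.
    have := detA; rewrite hDel0 => e h.
    have : 0 <= kA * (8%:R^-1 - (a^+2 + b^+2 + 2%:R * (u * v)) / 4%:R) by rewrite -e; lra.
    rewrite pmulr_rge0 //; lra.
  right. move: kAle; rewrite /kA hri mulr1 => h.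
  rewrite hb2. nra.
case: hDel => // hDel.
have h0 : (a - b)^+2 <= 0 by nra.
have h1 : (a - b)^+2 = 0 by apply: le_anti; rewrite h0 sqr_ge0.
by apply/eqP; rewrite -subr_eq0 -sqrf_eq0 h1.
Qed.


End Alg.

Section Cpx.

Variable R : realType.
Local Open Scope complex_scope.
Definition Qf (S : 'M[R]_(2+2)) (x y : 'I_(2+2) -> R) : R :=
  \sum_i \sum_j (S i j * (x i * x j + y i * y j) - (Omega2 R i j / 2) * (x i * y j - y i * x j)).

Lemma i_half : ('i / 2%:R : R[i]) = 0 +i* (2%:R)^-1.
Proof.
have h2 : (2%:R : R) != 0 by rewrite pnatr_eq0.
have -> : (2%:R : R[i]) = (2%:R : R) +i* 0 by rewrite -(rmorph_nat (real_complex R)).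
apply: (canLR (mulfK _)).
  by apply/eqP => /(congr1 (@complex.Re R)) /= /eqP; rewrite (negbTE h2).
simpc. by rewrite mulVf.
Qed.

Lemma ReD (x y : R[i]) : complex.Re (x + y) = complex.Re x + complex.Re y. Proof. by case: x; case: y. Qed.

Lemma Re_sum n (F : 'I_n -> R[i]) : complex.Re (\sum_(i < n) F i) = \sum_(i < n) complex.Re (F i).
Proof. elim/big_rec2: _ => // i a b _ <-; by rewrite ReD. Qed.

Lemma term (xi yi xj yj s t : R) :
  complex.Re (((xi +i* yi)^*) * ((s%:C) + ('i / 2%:R) * (t%:C)) * (xj +i* yj)) =
  s * (xi * xj + yi * yj) - t / 2%:R * (xi * yj - yi * xj).
Proof.
rewrite i_half /=. simpc. rewrite /=. ring.
Qed.

Lemma bf_Qf (S : 'M[R]_(2+2)) : bona_fide S -> forall x y, 0 <= Qf S x y.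
Proof.
move=> H x y.
have := H (\col_i (x i +i* y i)).
rewrite lecE => /andP [_]; rewrite /=.
set e := complex.Re _.
suff -> : e = Qf S x y by [].
rewrite /e /Qf !mxE Re_sum exchange_big /=.
apply: eq_bigr => i _.
rewrite !mxE mulr_suml Re_sum.
apply: eq_bigr => j _.
rewrite !mxE. exact: term.
Qed.
End Cpx.

Section Mx.

Variable R : realType.
Definition sigf (a b r c s u v : R) (i j : nat) : R :=
  match i, j with
  | 0, 0 => a * r | 0, 1 => 0 | 0, 2 => c * u | 0, 3 => - (s * v)
  | 1, 0 => 0 | 1, 1 => a * r^-1 | 1, 2 => s * u | 1, 3 => c * v
  | 2, 0 => c * u | 2, 1 => s * u | 2, 2 => b | 2, 3 => 0
  | 3, 0 => - (s * v) | 3, 1 => c * v | 3, 2 => 0 | 3, 3 => b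
  | _, _ => 0 end.
Lemma Sig_mx a b r phi cp cm : Sigma_of a b r phi cp cm =
  \matrix_(i < 4, j < 4) sigf a b r (cos phi) (sin phi) cp cm i j.
Proof.
apply/matrixP => i j; rewrite mxE [in RHS]mxE.
case: (splitP i) => i' Hi'; rewrite mxE; case: (splitP j) => j' Hj'; rewrite Hi' Hj';
case: i' {Hi'} => [[|[|k]] Hk] //; case: j' {Hj'} => [[|[|l]] Hl] //=;
rewrite ?mxE /= ?big_ord_recr ?big_ord0 /= ?mxE /=; try ring.
Qed.
Definition shiftf (f : nat -> nat -> R) (j : nat) (a b : nat) := f a.+1 (bump j b).
Lemma detS n (f : nat -> nat -> R) : \det (\matrix_(i < n.+1, j < n.+1) f i j) =
  \sum_(j < n.+1) f 0%N j * ((-1) ^+ j * \det (\matrix_(i < n, k < n) shiftf f j i k)).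
Proof.
rewrite (expand_det_row _ ord0); apply: eq_bigr => j _.
rewrite /cofactor mxE add0n; congr (_ * (_ * \det _)).
by apply/matrixP => i k; rewrite !mxE.
Qed.
Lemma det_Sig (a b r phi u v : R) : \det (Sigma_of a b r phi u v) =
  let c := cos phi in let s := sin phi in
  (b * (a * r) - (c^+2 * u^+2 + s^+2 * v^+2)) * (b * (a * r^-1) - (s^+2 * u^+2 + c^+2 * v^+2))
   - (c * s * (u^+2 - v^+2))^+2.
Proof.
rewrite Sig_mx /=.
do ![rewrite detS !big_ord_recr big_ord0 /=]. rewrite /shiftf /= !det_mx00 /=.
ring.
Qed.

Definition v4 (x0 x1 x2 x3 : R) (i : 'I_(2+2)) : R := nth 0 [:: x0; x1; x2; x3] i.
Lemma sum4 (F : 'I_(2+2) -> R) : \sum_(i < 2+2) F i =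
  F (lshift 2 ord0) + F (lshift 2 ord_max) + F (rshift 2 ord0) + F (rshift 2 ord_max).
Proof. rewrite big_split_ord /= !big_ord_recr !big_ord0 /= !add0r.
have -> : widen_ord (leqnSn 1) ord_max = ord0 :> 'I_2 by apply: val_inj.
by rewrite addrA. Qed.
Lemma Qf_Sig (a b r phi u v x0 x1 x2 x3 y0 y1 y2 y3 : R) :
  Qf R (Sigma_of a b r phi u v) (v4 x0 x1 x2 x3) (v4 y0 y1 y2 y3) =
  Qp _ a b r r^-1 (cos phi) (sin phi) u v x0 x1 x2 x3 y0 y1 y2 y3.
Proof.
rewrite /Qf sum4 !sum4.
rewrite /Sigma_of /Omega2 !(block_mxEul, block_mxEur, block_mxEdl, block_mxEdr).
rewrite /v4 /Smx /Rmx /Cmx /Jmx !mxE /=.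
rewrite !big_ord_recr !big_ord0 /= !mxE /= /Qp !mulr1n !mulr0n.
set ri := r^-1. field; by [].
Qed.
End Mx.

Theorem lemma8 (R : realType) (a b r phi cp cm : R) :
  0 < r -> pure_gaussian_cov (Sigma_of a b r phi cp cm) -> a = b.
Proof.
move=> hr [_ [hbf hdet]].
apply: (@core R a b r r^-1 (cos phi) (sin phi) cp cm hr).
- by rewrite mulfV // gt_eqF.
- by rewrite cos2Dsin2.
- move=> x0 x1 x2 x3 y0 y1 y2 y3.
  rewrite -Qf_Sig; exact: bf_Qf.
- by rewrite -hdet det_Sig.
Qed.
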